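(* A normed space $P$ is extremely projective in $\mathbf{Nor}$ if and only if $P$ is a near-retract in $\mathbf{Nor}$ of $l_1^0(\Lambda)$ for some index set $\Lambda$.
   Context: $\mathbf{Nor}$ is the category of normed spaces and bounded operators. An operator $\tau:F\to E$ is coisometric if $\|\tau\|\le1$ and for each $x\in E$, $\varepsilon>0$ there is $y\in F$ with $\tau(y)=x$, $\|y\|<\|x\|+\varepsilon$. A normed space $P$ is extremely projective in $\mathbf{Nor}$ if for every coisometric operator $\tau:F\to E$ between normed spaces, every bounded operator $\varphi:P\to E$ and every $\varepsilon>0$ there is a bounded $\psi:P\to F$ with $\tau\psi=\varphi$ and $\|\psi\|<\|\varphi\|+\varepsilon$. A contractive operator $\sigma:Q\to P$ is a near-retraction if for every $\varepsilon>0$ there is a bounded $\rho:P\to Q$ with $\sigma\rho=1_P$ and $\|\rho\|<1+\varepsilon$; then $P$ is a near-retract of $Q$. For a set $\Lambda$, $l_1^0(\Lambda)$ denotes the finitely supported functions on $\Lambda$ with the $l_1$-norm, and $l_1^0(\emptyset)=0$. *)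

(* Defs.v *)
From Stdlib Require Import Reals List ClassicalEpsilon.
Open Scope R_scope.

Record NormData := {
  carrier :> Type;
  vzero : carrier;
  vadd : carrier -> carrier -> carrier;
  vopp : carrier -> carrier;
  vscal : R -> carrier -> carrier;
  vnorm : carrier -> R
}.

Arguments vzero {_}.
Arguments vadd {_} _ _.
Arguments vopp {_} _.
Arguments vscal {_} _ _.
Arguments vnorm {_} _.

Definition is_normed_space (V : NormData) : Prop :=
  (forall x y z : V, vadd x (vadd y z) = vadd (vadd x y) z) /\
  (forall x y : V, vadd x y = vadd y x) /\
  (forall x : V, vadd x vzero = x) /\
  (forall x : V, vadd x (vopp x) = vzero) /\
  (forall (a b : R) (x : V), vscal a (vscal b x) = vscal (a * b) x) /\
  (forall x : V, vscal 1 x = x) /\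
  (forall (a : R) (x y : V), vscal a (vadd x y) = vadd (vscal a x) (vscal a y)) /\
  (forall (a b : R) (x : V), vscal (a + b) x = vadd (vscal a x) (vscal b x)) /\
  (forall x : V, vnorm x = 0 -> x = vzero) /\
  (forall (a : R) (x : V), vnorm (vscal a x) = Rabs a * vnorm x) /\
  (forall x y : V, vnorm (vadd x y) <= vnorm x + vnorm y).

Definition is_linear {V W : NormData} (f : V -> W) : Prop :=
  (forall x y : V, f (vadd x y) = vadd (f x) (f y)) /\
  (forall (a : R) (x : V), f (vscal a x) = vscal a (f x)).

Definition bounded_op {V W : NormData} (f : V -> W) : Prop :=
  is_linear f /\ exists c : R, forall x : V, vnorm (f x) <= c * vnorm x.

Definition is_opnorm {V W : NormData} (f : V -> W) (r : R) : Prop :=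
  (forall x : V, vnorm (f x) <= r * vnorm x) /\
  (forall c : R, (forall x : V, vnorm (f x) <= c * vnorm x) -> r <= c).

Definition contractive_op {V W : NormData} (f : V -> W) : Prop :=
  bounded_op f /\ exists r, is_opnorm f r /\ r <= 1.

Definition coisometric {F E : NormData} (tau : F -> E) : Prop :=
  contractive_op tau /\
  forall (x : E) (eps : R), 0 < eps ->
    exists y : F, tau y = x /\ vnorm y < vnorm x + eps.

Definition extremely_projective (P : NormData) : Prop :=
  forall (F E : NormData), is_normed_space F -> is_normed_space E ->
  forall tau : F -> E, coisometric tau ->
  forall phi : P -> E, bounded_op phi ->
  forall eps : R, 0 < eps ->
  exists psi : P -> F, bounded_op psi /\
    (forall x : P, tau (psi x) = phi x) /\
    (exists s r, is_opnorm psi s /\ is_opnorm phi r /\ s < r + eps).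

Definition near_retraction {Q P : NormData} (sigma : Q -> P) : Prop :=
  contractive_op sigma /\
  forall eps : R, 0 < eps ->
    exists rho : P -> Q, bounded_op rho /\
      (forall x : P, sigma (rho x) = x) /\
      (exists s, is_opnorm rho s /\ s < 1 + eps).

Definition near_retract_of (P Q : NormData) : Prop :=
  exists sigma : Q -> P, near_retraction sigma.

Definition fin_supp {L : Type} (f : L -> R) : Prop :=
  exists l : list L, forall x, f x <> 0 -> In x l.

Definition l10_car (L : Type) : Type := { f : L -> R | fin_supp f }.

Lemma fs_zero (L : Type) : fin_supp (fun _ : L => 0).
Proof. exists nil; intros x H; exfalso; apply H; reflexivity. Qed.

Lemma fs_add (L : Type) (f g : L -> R) :
  fin_supp f -> fin_supp g -> fin_supp (fun x => f x + g x).
Proof.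
  intros [l1 H1] [l2 H2]; exists (l1 ++ l2); intros x Hx.
  apply in_or_app.
  destruct (Req_dec (f x) 0) as [Hf|Hf].
  - right; apply H2; intro Hg; apply Hx; rewrite Hf, Hg; ring.
  - left; apply H1; exact Hf.
Qed.

Lemma fs_scal (L : Type) (a : R) (f : L -> R) :
  fin_supp f -> fin_supp (fun x => a * f x).
Proof.
  intros [l H]; exists l; intros x Hx; apply H; intro Hf; apply Hx;
  rewrite Hf; ring.
Qed.

Definition sum_abs_on {L : Type} (f : L -> R) (l : list L) : R :=
  fold_right (fun x acc => Rabs (f x) + acc) 0 l.

(* the l_1 norm: sum of |f x| over (any duplicate-free list containing) the support *)
Definition l1_norm {L : Type} (f : L -> R) : R :=
  epsilon (inhabits 0) (fun r => exists l : list L,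
    NoDup l /\ (forall x, f x <> 0 -> In x l) /\ r = sum_abs_on f l).

Definition l10 (L : Type) : NormData := {|
  carrier := l10_car L;
  vzero := exist _ (fun _ => 0) (fs_zero L);
  vadd := fun f g => exist _ (fun x => proj1_sig f x + proj1_sig g x)
                           (fs_add L _ _ (proj2_sig f) (proj2_sig g));
  vopp := fun f => exist _ (fun x => (-1) * proj1_sig f x)
                         (fs_scal L (-1) _ (proj2_sig f));
  vscal := fun a f => exist _ (fun x => a * proj1_sig f x)
                            (fs_scal L a _ (proj2_sig f));
  vnorm := fun f => l1_norm (proj1_sig f)
|}.

(* Main.v *)
Require Import Defs.
From Stdlib Require Import Reals Lra List ClassicalEpsilon FunctionalExtensionality ProofIrrelevance Classical.
Open Scope R_scope.

Definition gsum {L M : Type} (op : M -> M -> M) (e : M) (t : L -> M) (l : list L) : M :=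
  fold_right (fun x acc => op (t x) acc) e l.

Lemma gsum_app {L M : Type} (op : M -> M -> M) e (t : L -> M) l1 l2
  (Ha : forall a b c, op a (op b c) = op (op a b) c) (Hu : forall a, op e a = a) :
  gsum op e t (l1 ++ l2) = op (gsum op e t l1) (gsum op e t l2).
Proof. induction l1 as [|x l1 IH]; simpl. rewrite Hu; auto. rewrite IH, Ha; auto. Qed.

Lemma gsum_ext {L M : Type} (op : M -> M -> M) e (t1 t2 : L -> M) l :
  (forall x, In x l -> t1 x = t2 x) -> gsum op e t1 l = gsum op e t2 l.
Proof.
  induction l as [|x l IH]; simpl; intros H; auto.
  rewrite H by auto. rewrite IH; auto.
Qed.

Lemma gsum_zero {L M : Type} (op : M -> M -> M) e (t : L -> M) l
  (Hu : forall a, op e a = a) :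
  (forall x, In x l -> t x = e) -> gsum op e t l = e.
Proof.
  induction l as [|x l IH]; simpl; intros H; auto.
  rewrite H by auto. rewrite IH; auto.
Qed.

Lemma gsum_plus {L M : Type} (op : M -> M -> M) e (t1 t2 : L -> M) l
  (Ha : forall a b c, op a (op b c) = op (op a b) c) (Hc : forall a b, op a b = op b a)
  (Hu : forall a, op e a = a) :
  gsum op e (fun x => op (t1 x) (t2 x)) l = op (gsum op e t1 l) (gsum op e t2 l).
Proof.
  induction l as [|x l IH]; simpl. rewrite Hu; auto.
  rewrite IH. rewrite !Ha. f_equal. rewrite <- !Ha. f_equal. apply Hc.
Qed.

Lemma gsum_inv {L M : Type} (op : M -> M -> M) e (t : L -> M) (S : L -> Prop)
  (Ha : forall a b c, op a (op b c) = op (op a b) c) (Hc : forall a b, op a b = op b a)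
  (Hu : forall a, op e a = a) (Ht : forall x, ~ S x -> t x = e) :
  forall l1 l2, NoDup l1 -> NoDup l2 -> (forall x, S x -> (In x l1 <-> In x l2)) ->
  gsum op e t l1 = gsum op e t l2.
Proof.
  induction l1 as [|a l1 IH]; intros l2 N1 N2 H.
  - simpl. symmetry. apply gsum_zero; auto. intros x Hx. apply Ht. intro HS.
    apply (proj2 (H x HS)) in Hx. destruct Hx.
  - apply NoDup_cons_iff in N1. destruct N1 as [Na N1].
    destruct (classic (In a l2)) as [Hin|Hnin].
    + destruct (in_split _ _ Hin) as (l2a & l2b & E). subst l2.
      rewrite gsum_app by auto. simpl.
      rewrite (IH (l2a ++ l2b)).
      * rewrite gsum_app by auto. rewrite !Ha. f_equal. apply Hc.
      * auto.
      * eapply NoDup_remove_1; eauto.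
      * intros x HS. pose proof (NoDup_remove_2 _ _ _ N2) as Hn.
        destruct (classic (x = a)) as [Ex|Ex].
        { subst x. split; intro; contradiction. }
        pose proof (H x HS) as Hx. simpl in Hx. rewrite !in_app_iff in *. simpl in Hx.
        split; intro Hy.
        { destruct (proj1 Hx (or_intror Hy)) as [?|[?|?]]; auto. congruence. }
        { destruct (proj2 Hx (match Hy with or_introl h => or_introl h | or_intror h => or_intror (or_intror h) end)) as [?|?]; auto. congruence. }
    + assert (Hna : ~ S a).
      { intro HS. apply Hnin. apply (H a HS). left; auto. }
      simpl. rewrite Ht by auto. rewrite Hu. apply IH; auto.
      intros x HS. split; intro Hy.
      * apply (H x HS). right; auto.
      * apply (H x HS) in Hy. destruct Hy as [Hy|Hy]; auto. subst; contradiction.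
Qed.
Lemma ns_assoc (V : NormData) (H : is_normed_space V) : forall x y z : V, vadd x (vadd y z) = vadd (vadd x y) z.
Proof. apply H. Qed.
Lemma ns_comm (V : NormData) (H : is_normed_space V) : forall x y : V, vadd x y = vadd y x.
Proof. apply H. Qed.
Lemma ns_add0 (V : NormData) (H : is_normed_space V) : forall x : V, vadd x vzero = x.
Proof. apply H. Qed.
Lemma ns_addopp (V : NormData) (H : is_normed_space V) : forall x : V, vadd x (vopp x) = vzero.
Proof. apply H. Qed.
Lemma ns_scalA (V : NormData) (H : is_normed_space V) : forall (a b : R) (x : V), vscal a (vscal b x) = vscal (a * b) x.
Proof. apply H. Qed.
Lemma ns_scal1 (V : NormData) (H : is_normed_space V) : forall x : V, vscal 1 x = x.
Proof. apply H. Qed.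
Lemma ns_scalDv (V : NormData) (H : is_normed_space V) : forall (a : R) (x y : V), vscal a (vadd x y) = vadd (vscal a x) (vscal a y).
Proof. apply H. Qed.
Lemma ns_scalDs (V : NormData) (H : is_normed_space V) : forall (a b : R) (x : V), vscal (a + b) x = vadd (vscal a x) (vscal b x).
Proof. apply H. Qed.
Lemma ns_norm0 (V : NormData) (H : is_normed_space V) : forall x : V, vnorm x = 0 -> x = vzero.
Proof. apply H. Qed.
Lemma ns_normZ (V : NormData) (H : is_normed_space V) : forall (a : R) (x : V), vnorm (vscal a x) = Rabs a * vnorm x.
Proof. apply H. Qed.
Lemma ns_tri (V : NormData) (H : is_normed_space V) : forall x y : V, vnorm (vadd x y) <= vnorm x + vnorm y.
Proof. apply H. Qed.

Lemma ns_0add (V : NormData) (H : is_normed_space V) (x : V) : vadd vzero x = x.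
Proof. rewrite ns_comm, ns_add0; auto. Qed.

Lemma ns_cancel (V : NormData) (H : is_normed_space V) (x y z : V) : vadd x y = vadd x z -> y = z.
Proof.
  intro E. assert (E2 : vadd (vopp x) (vadd x y) = vadd (vopp x) (vadd x z)) by (rewrite E; auto).
  rewrite !(ns_assoc V H), (ns_comm V H (vopp x)), !(ns_addopp V H), !(ns_0add V H) in E2. auto.
Qed.

Lemma ns_scal0 (V : NormData) (H : is_normed_space V) (x : V) : vscal 0 x = vzero.
Proof.
  apply (ns_cancel V H (vscal 0 x)). rewrite ns_add0 by auto. rewrite <- ns_scalDs by auto.
  f_equal; ring.
Qed.

Lemma ns_scalz (V : NormData) (H : is_normed_space V) (a : R) : vscal a (@vzero V) = vzero.
Proof.
  rewrite <- (ns_scal0 V H vzero) at 1. rewrite ns_scalA by auto. rewrite Rmult_0_r. apply ns_scal0; auto.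
Qed.

Lemma ns_normz (V : NormData) (H : is_normed_space V) : vnorm (@vzero V) = 0.
Proof.
  rewrite <- (ns_scal0 V H vzero). rewrite ns_normZ by auto. rewrite Rabs_R0; ring.
Qed.

Lemma ns_nonneg (V : NormData) (H : is_normed_space V) (x : V) : 0 <= vnorm x.
Proof.
  assert (E : vadd x (vscal (-1) x) = vzero).
  { rewrite <- (ns_scal1 V H x) at 1. rewrite <- ns_scalDs by auto.
    replace (1 + -1) with 0 by ring. apply ns_scal0; auto. }
  pose proof (ns_tri V H x (vscal (-1) x)) as T. rewrite E, ns_normz, ns_normZ in T by auto.
  replace (Rabs (-1)) with 1 in T by (rewrite Rabs_left; lra). lra.
Qed.

Lemma ns_norm_sum (V : NormData) (H : is_normed_space V) {L : Type} (t : L -> V) l :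
  vnorm (gsum vadd vzero t l) <= gsum Rplus 0 (fun x => vnorm (t x)) l.
Proof.
  induction l as [|x l IH]; simpl. rewrite ns_normz; auto; lra.
  eapply Rle_trans. apply ns_tri; auto. lra.
Qed.

Lemma lin_zero (V W : NormData) (HV : is_normed_space V) (HW : is_normed_space W) (f : V -> W) :
  is_linear f -> f vzero = vzero.
Proof.
  intros [_ Hs]. rewrite <- (ns_scal0 V HV vzero). rewrite Hs. apply ns_scal0; auto.
Qed.

Lemma lin_sum (V W : NormData) (HV : is_normed_space V) (HW : is_normed_space W) (f : V -> W) {L : Type} (t : L -> V) l :
  is_linear f -> f (gsum vadd vzero t l) = gsum vadd vzero (fun x => f (t x)) l.
Proof.
  intros Hl. induction l as [|x l IH]; simpl. apply lin_zero; auto.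
  rewrite (proj1 Hl). rewrite IH; auto.
Qed.

Lemma scal_sum (V : NormData) (HV : is_normed_space V) {L : Type} (a : R) (t : L -> V) l :
  vscal a (gsum vadd vzero t l) = gsum vadd vzero (fun x => vscal a (t x)) l.
Proof.
  induction l as [|x l IH]; simpl. apply ns_scalz; auto.
  rewrite ns_scalDv, IH; auto.
Qed.

Lemma opnorm_exists (V W : NormData) (HV : is_normed_space V) (f : V -> W) (c : R) :
  (forall x, vnorm (f x) <= c * vnorm x) -> (exists x0 : V, vnorm x0 <> 0) ->
  exists r, is_opnorm f r.
Proof.
  intros Hc [x0 Hx0].
  set (A := fun t => exists x : V, vnorm x <> 0 /\ t = vnorm (f x) / vnorm x).
  assert (Hb : bound A).
  { exists c. intros t [x [Hx ->]]. pose proof (ns_nonneg V HV x).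
    apply Rmult_le_reg_r with (vnorm x). lra. unfold Rdiv. rewrite Rmult_assoc, Rinv_l by auto.
    rewrite Rmult_1_r. auto. }
  assert (Hne : exists t, A t) by (exists (vnorm (f x0) / vnorm x0); exists x0; auto).
  destruct (completeness A Hb Hne) as [r [Hr1 Hr2]].
  exists r. split.
  - intros x. pose proof (ns_nonneg V HV x). destruct (Req_dec (vnorm x) 0) as [E|E].
    + specialize (Hc x). rewrite E in *. rewrite Rmult_0_r in *. auto.
    + assert (A (vnorm (f x) / vnorm x)) as HA by (exists x; auto).
      apply Hr1 in HA. apply Rmult_le_reg_r with (/ vnorm x).
      apply Rinv_0_lt_compat; lra.
      rewrite Rmult_assoc, Rinv_r by auto. rewrite Rmult_1_r. auto.
  - intros c' Hc'. apply Hr2. intros t [x [Hx ->]]. pose proof (ns_nonneg V HV x).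
    apply Rmult_le_reg_r with (vnorm x). lra. unfold Rdiv. rewrite Rmult_assoc, Rinv_l by auto.
    rewrite Rmult_1_r. auto.
Qed.

Lemma opnorm_nonzero (V W : NormData) (f : V -> W) (r : R) :
  is_opnorm f r -> exists x0 : V, vnorm x0 <> 0.
Proof.
  intros [H1 H2]. apply NNPP. intro N.
  assert (r <= r - 1).
  { apply H2. intro x. assert (vnorm x = 0) as E by (apply NNPP; intro; apply N; exists x; auto).
    specialize (H1 x). rewrite E in *. lra. }
  lra.
Qed.

Lemma opnorm_nonneg (V W : NormData) (HV : is_normed_space V) (HW : is_normed_space W) (f : V -> W) (r : R) :
  is_opnorm f r -> 0 <= r.
Proof.
  intros Hr. destruct (opnorm_nonzero V W f r Hr) as [x0 Hx0].
  pose proof (ns_nonneg V HV x0). pose proof (ns_nonneg W HW (f x0)).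
  pose proof (proj1 Hr x0).
  destruct (Rle_or_lt 0 r); auto.
  assert (r * vnorm x0 < 0) by (apply Rmult_neg_pos; lra). lra.
Qed.

Definition deq {L : Type} (x y : L) : {x = y} + {x <> y} := excluded_middle_informative (x = y).

Definition cover {L : Type} (f : L -> R) (l : list L) : Prop := forall x, f x <> 0 -> In x l.

Lemma l10_eq {L : Type} (f g : l10 L) : (forall x, proj1_sig f x = proj1_sig g x) -> f = g.
Proof.
  destruct f as [f Hf], g as [g Hg]; simpl; intro E.
  assert (f = g) by (apply functional_extensionality; auto). subst g.
  f_equal. apply proof_irrelevance.
Qed.

Lemma nodup_cover {L : Type} (f : L -> R) : fin_supp f -> exists l, NoDup l /\ cover f l.
Proof.
  intros [l Hl]. exists (nodup deq l). split. apply NoDup_nodup.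
  intros x Hx. apply nodup_In. auto.
Qed.

Definition slist {L : Type} (f : l10 L) : list L :=
  epsilon (inhabits nil) (fun l => NoDup l /\ cover (proj1_sig f) l).

Lemma slist_spec {L : Type} (f : l10 L) : NoDup (slist f) /\ cover (proj1_sig f) (slist f).
Proof.
  unfold slist. apply epsilon_spec. apply nodup_cover. apply (proj2_sig f).
Qed.

Lemma sum_abs_inv {L : Type} (f : L -> R) l1 l2 :
  NoDup l1 -> NoDup l2 -> cover f l1 -> cover f l2 -> sum_abs_on f l1 = sum_abs_on f l2.
Proof.
  intros N1 N2 C1 C2. unfold sum_abs_on.
  apply (gsum_inv Rplus 0 (fun x => Rabs (f x)) (fun x => f x <> 0)); auto.
  intros; ring. intros; ring. intros; ring.
  intros x Hx. apply NNPP in Hx. rewrite Hx. apply Rabs_R0.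
  intros x Hx; split; auto.
Qed.

Lemma l1_norm_eq {L : Type} (f : L -> R) l :
  NoDup l -> cover f l -> l1_norm f = sum_abs_on f l.
Proof.
  intros N C. unfold l1_norm.
  destruct (epsilon_spec (inhabits 0) (fun r => exists l : list L,
    NoDup l /\ (forall x, f x <> 0 -> In x l) /\ r = sum_abs_on f l)) as [l' [N' [C' E]]].
  { exists (sum_abs_on f l), l; auto. }
  rewrite E. apply sum_abs_inv; auto.
Qed.

Lemma sum_abs_nonneg {L : Type} (f : L -> R) l : 0 <= sum_abs_on f l.
Proof. induction l; simpl. lra. pose proof (Rabs_pos (f a)); lra. Qed.

Lemma l10_norm_nonneg {L : Type} (f : l10 L) : 0 <= vnorm f.
Proof. simpl. destruct (slist_spec f). rewrite (l1_norm_eq _ _ H H0). apply sum_abs_nonneg. Qed.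

Lemma common_list {L : Type} (f g : L -> R) l1 l2 :
  cover f l1 -> cover g l2 -> NoDup (nodup deq (l1 ++ l2)) /\ cover f (nodup deq (l1 ++ l2))
   /\ cover g (nodup deq (l1 ++ l2)) /\ cover (fun x => f x + g x) (nodup deq (l1 ++ l2)).
Proof.
  intros C1 C2. split; [apply NoDup_nodup|].
  split; [|split]; intros x Hx; apply nodup_In; apply in_or_app.
  left; auto. right; auto.
  destruct (Req_dec (f x) 0) as [E|E]. right; apply C2; intro E2; apply Hx; rewrite E, E2; ring.
  left; auto.
Qed.

Lemma l10_ns (L : Type) : is_normed_space (l10 L).
Proof.
  repeat split.
  - intros; apply l10_eq; simpl; intros; ring.
  - intros; apply l10_eq; simpl; intros; ring.
  - intros; apply l10_eq; simpl; intros; ring.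
  - intros; apply l10_eq; simpl; intros; ring.
  - intros; apply l10_eq; simpl; intros; ring.
  - intros; apply l10_eq; simpl; intros; ring.
  - intros; apply l10_eq; simpl; intros; ring.
  - intros; apply l10_eq; simpl; intros; ring.
  - intros f Hf. simpl in Hf. destruct (slist_spec f) as [N C].
    rewrite (l1_norm_eq _ _ N C) in Hf.
    assert (Hz : forall x, In x (slist f) -> Rabs (proj1_sig f x) = 0).
    { revert Hf. clear. induction (slist f) as [|a l IH]; simpl; intros Hf x Hx. destruct Hx.
      pose proof (Rabs_pos (proj1_sig f a)). pose proof (sum_abs_nonneg (proj1_sig f) l).
      unfold sum_abs_on in Hf, IH, H0. simpl in *.
      destruct Hx as [->|Hx]. lra. apply IH; auto. lra. }
    apply l10_eq; simpl; intros x. apply NNPP; intro Hx.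
    specialize (Hz x (C x Hx)). apply Hx. destruct (Req_dec (proj1_sig f x) 0); auto.
    exfalso. apply Rabs_no_R0 in H; auto.
  - intros a f. simpl. destruct (slist_spec f) as [N C].
    rewrite (l1_norm_eq _ _ N C). rewrite (l1_norm_eq _ (slist f) N).
    + clear. induction (slist f); simpl. ring. unfold sum_abs_on in *; simpl. rewrite IHl, Rabs_mult. ring.
    + intros x Hx. apply C. intro E. apply Hx. simpl. rewrite E; ring.
  - intros f g. simpl. destruct (slist_spec f) as [N1 C1], (slist_spec g) as [N2 C2].
    destruct (common_list _ _ _ _ C1 C2) as (N & Cf & Cg & Cfg).
    rewrite (l1_norm_eq _ _ N Cf), (l1_norm_eq _ _ N Cg), (l1_norm_eq _ _ N Cfg).
    clear. induction (nodup deq (slist f ++ slist g)); simpl. lra.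
    unfold sum_abs_on in *; simpl. pose proof (Rabs_triang (proj1_sig f a) (proj1_sig g a)). lra.
Qed.

Definition Tsum {L : Type} {V : NormData} (y : L -> V) (f : l10 L) : V :=
  gsum vadd vzero (fun x => vscal (proj1_sig f x) (y x)) (slist f).

Lemma Tsum_eq {L : Type} (V : NormData) (HV : is_normed_space V) (y : L -> V) (f : l10 L) l :
  NoDup l -> cover (proj1_sig f) l ->
  Tsum y f = gsum vadd vzero (fun x => vscal (proj1_sig f x) (y x)) l.
Proof.
  intros N C. destruct (slist_spec f) as [N' C']. unfold Tsum.
  apply (gsum_inv vadd vzero _ (fun x => proj1_sig f x <> 0)); auto.
  apply ns_assoc; auto. apply ns_comm; auto. apply ns_0add; auto.
  intros x Hx. apply NNPP in Hx. rewrite Hx. apply ns_scal0; auto.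
  intros x Hx; split; auto.
Qed.

Lemma Tsum_lin {L : Type} (V : NormData) (HV : is_normed_space V) (y : L -> V) :
  is_linear (Tsum (V := V) y).
Proof.
  split.
  - intros f g. destruct (slist_spec f) as [N1 C1], (slist_spec g) as [N2 C2].
    destruct (common_list _ _ _ _ C1 C2) as (N & Cf & Cg & Cfg).
    rewrite (Tsum_eq V HV y f _ N Cf), (Tsum_eq V HV y g _ N Cg), (Tsum_eq V HV y (vadd f g) _ N Cfg).
    rewrite <- gsum_plus. apply gsum_ext. intros x _. simpl. apply ns_scalDs; auto.
    apply ns_assoc; auto. apply ns_comm; auto. apply ns_0add; auto.
  - intros a f. destruct (slist_spec f) as [N C].
    rewrite (Tsum_eq V HV y f _ N C), (Tsum_eq V HV y (vscal a f) _ N).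
    + rewrite scal_sum by auto. apply gsum_ext. intros x _. simpl. rewrite ns_scalA; auto.
    + intros x Hx. apply C. intro E. apply Hx. simpl. rewrite E; ring.
Qed.

Lemma Tsum_bound {L : Type} (V : NormData) (HV : is_normed_space V) (y : L -> V) (M : R) :
  (forall x, vnorm (y x) <= M) -> forall f : l10 L, vnorm (Tsum y f) <= M * vnorm f.
Proof.
  intros HM f. destruct (slist_spec f) as [N C]. simpl vnorm at 2.
  rewrite (l1_norm_eq _ _ N C). unfold Tsum.
  eapply Rle_trans. apply ns_norm_sum; auto.
  clear N C. induction (slist f); simpl. lra.
  unfold sum_abs_on in *; simpl. rewrite ns_normZ by auto.
  pose proof (Rmult_le_compat_l (Rabs (proj1_sig f a)) _ _ (Rabs_pos _) (HM a)). nra.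
Qed.

Lemma fs_delta {L : Type} (a : L) (c : R) : fin_supp (fun z => if deq z a then c else 0).
Proof. exists (a :: nil). intros z H. destruct (deq z a). left; auto. contradiction. Qed.

Definition delta {L : Type} (a : L) (c : R) : l10 L := exist _ _ (fs_delta a c).

Lemma delta_cover {L : Type} (a : L) c : cover (proj1_sig (delta a c)) (a :: nil).
Proof. intros z H. simpl in H. destruct (deq z a). left; auto. contradiction. Qed.

Lemma Tsum_delta {L : Type} (V : NormData) (HV : is_normed_space V) (y : L -> V) a c :
  Tsum y (delta a c) = vscal c (y a).
Proof.
  rewrite (Tsum_eq V HV y _ (a :: nil)). simpl. destruct (deq a a); [|congruence].
  apply ns_add0; auto. constructor. simpl; auto. constructor. apply delta_cover.
Qed.

Lemma delta_norm {L : Type} (a : L) c : vnorm (delta a c) = Rabs c.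
Proof.
  simpl. rewrite (l1_norm_eq _ (a :: nil)). unfold sum_abs_on. simpl.
  destruct (deq a a); [|congruence]. ring. constructor. simpl; auto. constructor. apply delta_cover.
Qed.

Lemma l10_sum_pt {L K : Type} (t : K -> l10 L) l z :
  proj1_sig (gsum vadd vzero t l) z = gsum Rplus 0 (fun x => proj1_sig (t x) z) l.
Proof. induction l as [|a l IH]; [reflexivity|]. transitivity (proj1_sig (t a) z + proj1_sig (gsum vadd vzero t l) z). reflexivity. rewrite IH. reflexivity. Qed.

Lemma sum_delta_pt {L : Type} (f : L -> R) z l : NoDup l ->
  (In z l -> gsum Rplus 0 (fun x => f x * (if deq z x then 1 else 0)) l = f z) /\
  (~ In z l -> gsum Rplus 0 (fun x => f x * (if deq z x then 1 else 0)) l = 0).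
Proof.
  induction l as [|a l IH]; intros N; simpl. split; intros; [contradiction|auto].
  apply NoDup_cons_iff in N. destruct N as [Na N]. destruct (IH N) as [I1 I2].
  destruct (deq z a) as [E|E].
  - subst. split; intros. rewrite I2 by auto. ring. exfalso; auto.
  - split; intros H.
    + destruct H as [H|H]. congruence. rewrite I1 by auto. ring.
    + rewrite I2. ring. intro; apply H; auto.
Qed.

Lemma l10_decomp {L : Type} (f : l10 L) :
  f = gsum vadd vzero (fun a => vscal (proj1_sig f a) (delta a 1)) (slist f).
Proof.
  destruct (slist_spec f) as [N C]. apply l10_eq. intro z. rewrite l10_sum_pt.
  destruct (sum_delta_pt (proj1_sig f) z _ N) as [I1 I2].
  erewrite gsum_ext.
  2:{ intros x _. simpl. replace (if deq x z then 1 else 0) with (if deq z x then 1 else 0). reflexivity.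
      destruct (deq x z), (deq z x); congruence. }
  destruct (classic (In z (slist f))) as [H|H]. rewrite I1; auto.
  rewrite I2 by auto. symmetry. apply NNPP. intro E. apply H. apply C. auto.
Qed.

Lemma decomp {L : Type} (V : NormData) (HV : is_normed_space V) (A : l10 L -> V) :
  is_linear A -> forall f, A f = Tsum (fun a => A (delta a 1)) f.
Proof.
  intros HA f. rewrite (l10_decomp f) at 1. rewrite (lin_sum (l10 L) V (l10_ns L) HV A) by auto.
  unfold Tsum. apply gsum_ext. intros x _. apply (proj2 HA).
Qed.

Lemma Tsum_comp {L : Type} (V W : NormData) (HV : is_normed_space V) (HW : is_normed_space W)
  (g : V -> W) (y : L -> V) f : is_linear g -> g (Tsum y f) = Tsum (fun a => g (y a)) f.
Proof.
  intros Hg. unfold Tsum. rewrite (lin_sum V W HV HW g) by auto. apply gsum_ext. intros; apply (proj2 Hg).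
Qed.

Lemma dir1 (P : NormData) (HP : is_normed_space P) :
  extremely_projective P -> exists L : Type, near_retract_of P (l10 L).
Proof.
  intros EP. exists (carrier P).
  set (u := fun x : P => vscal (/ vnorm x) x).
  assert (Hu : forall x, vnorm (u x) <= 1).
  { intro x. unfold u. rewrite ns_normZ by auto. pose proof (ns_nonneg P HP x).
    destruct (Req_dec (vnorm x) 0) as [E|E]. rewrite E. lra.
    rewrite Rabs_right. rewrite Rinv_l by auto. lra. left. apply Rinv_0_lt_compat. lra. }
  set (sigma := Tsum (V := P) u).
  assert (Slin : is_linear sigma) by (apply Tsum_lin; auto).
  assert (Sb : forall f, vnorm (sigma f) <= 1 * vnorm f) by (apply Tsum_bound; auto).
  assert (Hnz : exists f : l10 P, vnorm f <> 0).
  { exists (delta vzero 1). rewrite delta_norm, Rabs_R1. lra. }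
  destruct (opnorm_exists _ _ (l10_ns P) sigma 1 Sb Hnz) as [rs Hrs].
  assert (Scontr : contractive_op sigma).
  { split. split; auto. exists 1; auto. exists rs; split; auto. apply (proj2 Hrs); auto. }
  assert (Scoi : coisometric sigma).
  { split; auto. intros x eps Heps. exists (delta x (vnorm x)). split.
    - unfold sigma. rewrite Tsum_delta by auto. unfold u. rewrite ns_scalA by auto.
      destruct (Req_dec (vnorm x) 0) as [E|E].
      + apply ns_norm0 in E; auto. rewrite E. apply ns_scalz; auto.
      + rewrite Rinv_r by auto. apply ns_scal1; auto.
    - rewrite delta_norm. rewrite Rabs_right. lra. apply Rle_ge, ns_nonneg; auto. }
  assert (Idb : bounded_op (fun x : P => x)).
  { split. split; auto. exists 1. intros; lra. }
  exists sigma. split; auto. intros eps Heps.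
  destruct (EP (l10 P) P (l10_ns P) HP sigma Scoi (fun x => x) Idb eps Heps)
    as [psi [Hpb [Hpi [s [r [Hs [Hr Hsr]]]]]]].
  exists psi. split; auto. split; auto. exists s. split; auto.
  assert (r <= 1) by (apply (proj2 Hr); intros; lra). lra.
Qed.

Lemma dir2 (P : NormData) (HP : is_normed_space P) :
  (exists L : Type, near_retract_of P (l10 L)) -> extremely_projective P.
Proof.
  intros [L [sigma [[[Slin _] [rs [Hrs Hrs1]]] Hnr]]].
  intros F E HF HE tau [[[Tlin _] _] Hcoi] phi [Plin [c Hc]] eps Heps.
  destruct (Hnr 1 Rlt_0_1) as [rho1 [_ [_ [s1 [Hs1 _]]]]].
  pose proof (opnorm_nonzero _ _ _ _ Hs1) as Pnz.
  destruct (opnorm_exists _ _ HP phi c Hc Pnz) as [r Hr].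
  assert (r0 : 0 <= r) by (apply (opnorm_nonneg P E HP HE phi r Hr)).
  assert (Sb : forall f : l10 L, vnorm (sigma f) <= vnorm f).
  { intro f. pose proof (proj1 Hrs f). pose proof (l10_norm_nonneg f). nra. }
  set (d := Rmin 1 (eps / (r + 3))).
  assert (d0 : 0 < d).
  { unfold d. apply Rmin_glb_lt. lra. apply Rdiv_lt_0_compat; lra. }
  assert (d1 : d <= 1) by apply Rmin_l.
  assert (d2 : d * (r + 3) <= eps).
  { assert (d <= eps / (r+3)) by apply Rmin_r.
    apply Rmult_le_compat_r with (r := r + 3) in H. 2: lra.
    unfold Rdiv in H. rewrite Rmult_assoc, Rinv_l in H by lra. lra. }
  destruct (Hnr d d0) as [rho [[Rlin [cr Hcr]] [Hsr [s [Hs Hs1d]]]]].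
  assert (s0 : 0 <= s) by (apply (opnorm_nonneg P (l10 L) HP (l10_ns L) rho s Hs)).
  set (y := fun a : L => epsilon (inhabits (@vzero F))
             (fun y => tau y = phi (sigma (delta a 1)) /\ vnorm y < vnorm (phi (sigma (delta a 1))) + d)).
  assert (Hy : forall a, tau (y a) = phi (sigma (delta a 1)) /\ vnorm (y a) < vnorm (phi (sigma (delta a 1))) + d).
  { intro a. unfold y. apply epsilon_spec. apply Hcoi; auto. }
  assert (Hyb : forall a, vnorm (y a) <= r + d).
  { intro a. destruct (Hy a) as [_ H]. pose proof (proj1 Hr (sigma (delta a 1))).
    pose proof (Sb (delta a 1)). rewrite delta_norm, Rabs_R1 in H1.
    pose proof (Rmult_le_compat_l r _ _ r0 H1). lra. }
  set (psi := fun x : P => Tsum y (rho x)).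
  assert (Psil : is_linear psi).
  { destruct (Tsum_lin F HF y) as [A1 A2]. destruct Rlin as [B1 B2]. split; intros; unfold psi.
    rewrite B1, A1; auto. rewrite B2, A2; auto. }
  assert (Psib : forall x, vnorm (psi x) <= ((r + d) * s) * vnorm x).
  { intro x. unfold psi. eapply Rle_trans. apply (Tsum_bound F HF y (r + d) Hyb).
    rewrite Rmult_assoc. apply Rmult_le_compat_l. lra. apply (proj1 Hs). }
  destruct (opnorm_exists _ _ HP psi _ Psib Pnz) as [s' Hs'].
  exists psi. split. split; auto. exists ((r + d) * s); auto.
  split.
  - intro x. unfold psi. rewrite (Tsum_comp F E HF HE tau y) by auto.
    transitivity (Tsum (fun a => phi (sigma (delta a 1))) (rho x)).
    + f_equal. apply functional_extensionality. intro a. apply (proj1 (Hy a)).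
    + rewrite <- (decomp E HE (fun f => phi (sigma f))). rewrite Hsr. auto.
      destruct Slin as [S1 S2], Plin as [P1 P2]. split; intros. rewrite S1, P1; auto. rewrite S2, P2; auto.
  - exists s', r. split; auto. split; auto.
    assert (s' <= (r + d) * s) by (apply (proj2 Hs'); auto).
    assert ((r + d) * s <= (r + d) * (1 + d)) by (apply Rmult_le_compat_l; lra).
    nra.
Qed.

Theorem mainTheorem3 (P : NormData) (HP : is_normed_space P) :
  extremely_projective P <-> exists L : Type, near_retract_of P (l10 L).
Proof. split. apply dir1; auto. apply dir2; auto. Qed.
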